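(* Let $n>1$ be an integer and let $\pi_2,\ldots,\pi_{n-1}\in[0,1]$ be arbitrary. Consider the Markov chain $X_0,X_1,\ldots$ on the state space $\{1,\ldots,n\}$ with transition probabilities $$p_{1,2}=p_{n,n-1}=1,\qquad p_{i,i+1}=\pi_i,\quad p_{i,i-1}=1-\pi_i \quad (2\le i\le n-1).$$ All other transition probabilities are $0$. For states $i,j$, let $T_{i,j}=\min\{t>0: X_t=j\}$ be the hitting time of $j$ when the chain is started at $X_0=i$. Then $$\mathrm{E}\{T_{1,n}+T_{n,1}\}\ge 2(n-1)^2.$$
   Context: Expectations may be infinite. In that case the inequality holds trivially. *)

(* Defs.v *)
From HB Require Import structures.
From mathcomp Require Import all_boot all_order all_algebra.
From mathcomp Require Import all_classical all_reals all_analysis.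
Set Implicit Arguments. Unset Strict Implicit. Unset Printing Implicit Defensive.
Import Order.TTheory GRing.Theory Num.Theory.
Local Open Scope ring_scope.

Section Hitting.
Variables (R : realType) (T : finType) (P : T -> T -> R).

(* taboo i j t y = P(X_t = y and X_s <> j for all 1 <= s <= t | X_0 = i),
   i.e. the sum over all paths i = x_0, x_1, ..., x_t = y avoiding j at
   times 1..t of the products of the transition probabilities. *)
Fixpoint taboo (i j : T) (t : nat) : T -> R :=
  match t with
  | 0 => fun y => (y == i)%:R
  | t'.+1 => fun y => if y == j then 0 else \sum_(x : T) taboo i j t' x * P x y
  end.

Definition hit_law (i j : T) (t : nat) : R :=
  match t with
  | 0 => 0
  | t'.+1 => \sum_(x : T) taboo i j t' x * P x j
  end.

Local Open Scope ereal_scope.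

Definition hit_never (i j : T) : \bar R :=
  1 - \sum_(0 <= t <oo) (hit_law i j t)%:E.

(* E{T_{i,j}} in [0, +oo]: sum_t t P(T = t), plus +oo if P(T = +oo) > 0
   (in mathcomp's ereal, 0 * +oo = 0). *)
Definition expected_hit (i j : T) : \bar R :=
  \sum_(0 <= t <oo) ((t%:R * hit_law i j t)%R)%:E + hit_never i j * +oo.
End Hitting.

(* The chain of the statement on {1,...,n}, encoded on 'I_n: the ordinal x
   stands for the state x+1.  pi k is the probability pi_k (2 <= k <= n-1). *)
Definition bd_kernel (R : realType) (n : nat) (pi : nat -> R) (x y : 'I_n) : R :=
  let i := (val x).+1 in
  let j := (val y).+1 in
  if i == 1%N then (j == 2%N)%:R
  else if i == n then (j == n.-1)%:R
  else if j == i.+1 then pi i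
  else if j.+1 == i then 1 - pi i
  else 0.

(* Main.v *)
Require Import Defs.
From HB Require Import structures.
From mathcomp Require Import all_boot all_order all_algebra.
From mathcomp Require Import all_classical all_reals all_analysis.
From mathcomp Require Import ring lra zify.
Import Order.TTheory GRing.Theory Num.Theory.
Local Open Scope ring_scope.


Section Gen.
Variables (R : realType) (T : finType) (P : T -> T -> R).
Hypothesis P0 : forall x y, 0 <= P x y.
Hypothesis P1 : forall x, \sum_y P x y = 1.
Variables (i j : T).
Hypothesis ij : i != j.

Local Notation mu := (taboo P i j).
Local Notation h := (hit_law P i j).
Definition mass t := \sum_y mu t y.

Lemma sum_ind (F : T -> R) a : \sum_y (y == a)%:R * F y = F a.
Proof.
rewrite (bigD1 a) //= eqxx mul1r big1 ?addr0 // => y /negbTE ->.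
by rewrite mul0r.
Qed.

Lemma mu_ge0 t y : 0 <= mu t y.
Proof.
elim: t y => [|t IH] y /=; first by rewrite ler0n.
case: ifP => _ //; apply: sumr_ge0 => x _; exact: mulr_ge0.
Qed.

Lemma mu_j t : mu t j = 0.
Proof. by case: t => [|t] /=; rewrite ?eqxx // eq_sym (negbTE ij). Qed.

Lemma h_ge0 t : 0 <= h t.
Proof.
case: t => [|t] /=; first by [].
apply: sumr_ge0 => x _; exact: mulr_ge0 (mu_ge0 _ _) (P0 _ _).
Qed.

Lemma step_w (w : T -> R) t :
  h t.+1 * w j + \sum_y mu t.+1 y * w y = \sum_x mu t x * \sum_y P x y * w y.
Proof.
rewrite [RHS](eq_bigr (fun x => \sum_y mu t x * (P x y * w y))); last first.
  by move=> x _; rewrite mulr_sumr.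
rewrite exchange_big /= [RHS](bigD1 j) //= [X in _ + X = _](bigD1 j) //=.
rewrite eqxx mul0r add0r; congr (_ + _).
  by rewrite mulr_suml; apply: eq_bigr => x _; rewrite mulrA.
apply: eq_bigr => y /negbTE yj /=; rewrite yj mulr_suml.
by apply: eq_bigr => x _; rewrite mulrA.
Qed.

Lemma mass_step t : mass t.+1 + h t.+1 = mass t.
Proof.
rewrite /mass addrC.
have -> : h t.+1 + \sum_y mu t.+1 y = h t.+1 * 1 + \sum_y mu t.+1 y * 1.
  by rewrite mulr1; congr (_ + _); apply: eq_bigr => y _; rewrite mulr1.
rewrite step_w; apply: eq_bigr => x _.
by under eq_bigr do rewrite mulr1; rewrite P1 mulr1.
Qed.

Lemma mass0 : mass 0 = 1.
Proof.
rewrite /mass /= -[RHS](sum_ind (fun _ => 1) i).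
by apply: eq_bigr => y _; rewrite mulr1.
Qed.

Lemma mass_ge0 t : 0 <= mass t.
Proof. by apply: sumr_ge0 => y _; exact: mu_ge0. Qed.

Lemma partial_h N : \sum_(0 <= t < N.+1) h t = 1 - mass N.
Proof.
elim: N => [|N IH]; first by rewrite big_nat1 mass0 subrr.
have := mass_step N; rewrite big_nat_recr // IH; move: (h N.+1) => hh /=; lra.
Qed.

Lemma mass_noninc N M : (N <= M)%N -> mass M <= mass N.
Proof.
move=> /subnK <-; elim: (M - N)%N => [|k IH] //=.
rewrite addSn; have := mass_step (k + N); have := h_ge0 (k + N).+1; lra.
Qed.

Variable f : T -> R.
Hypothesis fi : f i = 0.
Hypothesis f0 : forall y, 0 <= f y.
Hypothesis drift : forall x, x != j -> \sum_y P x y * f y <= f x + 1.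

Definition Sp N := \sum_(0 <= t < N) t%:R * h t.

Lemma Sp_step N : Sp N.+2 = Sp N.+1 + N.+1%:R * h N.+1.
Proof. by rewrite /Sp big_nat_recr. Qed.

Lemma potential N :
  (1 - mass N) * f j + \sum_y mu N y * f y - N%:R * mass N <= Sp N.+1.
Proof.
elim: N => [|N IH].
  rewrite /Sp big_nat1 mass0 /= mul0r subrr mul0r subr0 add0r.
  by rewrite sum_ind fi.
have key : h N.+1 * f j + \sum_y mu N.+1 y * f y <= \sum_y mu N y * f y + mass N.
  rewrite step_w /mass -big_split /=; apply: ler_sum => x _.
  have [->|xj] := eqVneq x j; first by rewrite mu_j !mul0r add0r.
  rewrite -[X in _ <= _ + X]mulr1 -mulrDr; apply: ler_wpM2l; first exact: mu_ge0.
  exact: drift.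
have ms := mass_step N.
have hg := h_ge0 N.+1.
rewrite Sp_step.
move: IH key ms hg; rewrite -/(mass N.+1) -natr1.
move: (h N.+1) (mass N) (mass N.+1) (Sp N.+1) (\sum_y mu N y * f y)
  (\sum_y mu N.+1 y * f y) (f j) (N%:R) => a b c d e g k l /=.
move=> *; nra.
Qed.

Lemma tail N k : Sp N.+1 + N%:R * mass N <= Sp (k + N).+1 + N%:R * mass (k + N).
Proof.
elim: k => [|k IH] //=.
rewrite addSn Sp_step.
have ms := mass_step (k + N).
have hg := h_ge0 (k + N).+1.
have kN : N%:R <= (k + N).+1%:R :> R by rewrite ler_nat -addSn leq_addl.
move: IH ms hg kN.
move: (h (k + N).+1) (mass (k + N)) (mass (k + N).+1) (Sp (k + N).+1) (Sp N.+1)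
  ((k + N).+1%:R) (N%:R) (mass N) => a b c d e g l m /=.
move=> *; nra.
Qed.

Lemma small_mass (G := (\sum_(0 <= t <oo) (h t)%:E)%E) :
  G = 1%E -> forall eta, 0 < eta -> exists K, mass K < eta.
Proof.
move=> G1 eta eta0; case: (pselect (exists K, mass K < eta)) => // hno.
have hK : forall K, eta <= mass K.
  by move=> K; rewrite leNgt; apply/negP => hk; apply: hno; exists K.
have : (G <= (1 - eta)%:E)%E.
  apply: lime_le; first by apply: is_cvg_nneseries => t _ _; rewrite lee_fin h_ge0.
  apply: nearW => K; rewrite sumEFin lee_fin.
  case: K => [|K]; first by rewrite big_geq // subr_ge0 -mass0 hK.
  by rewrite partial_h lerB.
by rewrite G1 lee_fin; lra.
Qed.

Local Open Scope ereal_scope.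

Lemma hit_ge : (f j)%:E <= expected_hit P i j.
Proof.
rewrite /expected_hit /hit_never.
have hE0 : 0 <= \sum_(0 <= t <oo) ((t%:R * h t)%R)%:E.
  by apply: nneseries_ge0 => t _ _; rewrite lee_fin mulr_ge0 ?h_ge0.
have hG0 : 0 <= \sum_(0 <= t <oo) (h t)%:E.
  by apply: nneseries_ge0 => t _ _; rewrite lee_fin h_ge0.
have hG1 : \sum_(0 <= t <oo) (h t)%:E <= 1.
  apply: lime_le; first by apply: is_cvg_nneseries => t _ _; rewrite lee_fin h_ge0.
  apply: nearW => K; rewrite sumEFin lee_fin.
  case: K => [|K]; first by rewrite big_geq.
  by rewrite partial_h gerBl mass_ge0.
move: hE0 hG0 hG1 (@small_mass) (@nneseries_lim_ge R (fun t => ((t%:R * h t)%R)%:E) xpredT 0).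
set E := \sum_(0 <= t <oo) _.
set G := \sum_(0 <= t <oo) _.
move=> hE0 hG0 hG1 sm Ege.
have Gfin : G \is a fin_num by rewrite ge0_fin_numE // (le_lt_trans hG1) ?ltey.
rewrite le_eqVlt in hG1; case/orP: hG1 => [/eqP G1|Glt].
  rewrite G1 subee // mul0e adde0.
  apply/lee_addgt0Pr => del del0.
  have fj0 := f0 j.
  have p1 : (0 < 2 * (f j + 1))%R by lra.
  have [N hN] := sm G1 (del / (2 * (f j + 1)))%R (divr_gt0 del0 p1).
  have p2 : (0 < 2 * N.+1%:R :> R)%R by apply: mulr_gt0; rewrite ltr0n.
  have [K hK] := sm G1 (del / (2 * N.+1%:R))%R (divr_gt0 del0 p2).
  set M := maxn N K.
  have hMK : (mass M <= mass K)%R by apply: mass_noninc; rewrite leq_maxr.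
  have hNM : (N <= M)%N by rewrite leq_maxl.
  have ht := tail N (M - N); rewrite subnK // in ht.
  have hp := potential N.
  have hs0 : (0 <= \sum_y mu N y * f y)%R by apply: sumr_ge0 => y _; rewrite mulr_ge0 ?mu_ge0.
  have hmN := mass_ge0 N.
  have hmM := mass_ge0 M.
  rewrite ltr_pdivlMr // in hN.
  rewrite ltr_pdivlMr // in hK.
  have hS := Ege M.+1 (fun t _ _ => mulr_ge0 (ler0n _ t) (h_ge0 t)).
  rewrite sumEFin -/(Sp M.+1) in hS.
  have h3 : (N%:R * mass M <= N.+1%:R * mass K :> R)%R.
    by apply: ler_pM => //; rewrite ?ler0n // ler_nat.
  clear Ege; clearbody E; case: E hE0 hS => [e| |] // _ hS.
    rewrite lee_fin in hS; rewrite -EFinD lee_fin.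
    move: hS ht hp hs0 hN hK h3 hmN hmM fj0 del0.
    move: (Sp M.+1) (Sp N.+1) (mass N) (mass M) (mass K) (f j) (N%:R) (N.+1%:R) (\sum_y mu N y * f y)%R.
    move=> a b c d g k l m o *; nra.
  by rewrite leey.
have [g Gg] : exists g, G = g%:E by exists (fine G); rewrite fineK.
rewrite Gg lte_fin in Glt; rewrite Gg -EFinB muleC gt0_mulye ?lte_fin ?subr_gt0 //.
by rewrite addey ?leey // gt_eqF // (lt_le_trans _ hE0) // ltNy0.
Qed.
End Gen.



Section Chain.
Variables (R : realType) (n : nat) (hn : (1 < n)%N) (pi : nat -> R).
Hypothesis hpi : forall k : nat, (2 <= k <= n.-1)%N -> 0 <= pi k <= 1.

Lemma sum_ind_nat (F : nat -> R) a m : (a < m)%N ->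
  \sum_(0 <= k < m) (k == a)%:R * F k = F a.
Proof.
elim: m => // m IH ha; rewrite big_nat_recr //=.
have [am|am|<-] := ltngtP a m.
- by rewrite IH // mul0r addr0.
- by move: ha; rewrite ltnS leqNgt am.
- rewrite mul1r big1_seq ?add0r // => k; rewrite mem_index_iota => /andP[_ km].
  by rewrite (ltn_eqF km) mul0r.
Qed.

Lemma sum_ord_nat (G : nat -> R) : \sum_(y : 'I_n) G (val y) = \sum_(0 <= k < n) G k.
Proof. by rewrite big_mkord. Qed.

Definition kn (a k : nat) : R :=
  let i := a.+1 in
  let j := k.+1 in
  if i == 1%N then (j == 2%N)%:R
  else if i == n then (j == n.-1)%:R
  else if j == i.+1 then pi i
  else if j.+1 == i then 1 - pi i
  else 0.

Lemma row (F : nat -> R) (x : 'I_n) :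
  \sum_y bd_kernel pi x y * F (val y) =
  if val x == 0%N then F 1%N else if val x == n.-1 then F n.-2
  else pi (val x).+1 * F (val x).+1 + (1 - pi (val x).+1) * F (val x).-1.
Proof.
rewrite (sum_ord_nat (fun k => kn (val x) k * F k)).
case: x => a ha /=; rewrite /kn.
case: a ha => [|b] hb /=.
  by rewrite -(sum_ind_nat F 1 n hn); apply: eq_bigr.
have [e|e] := eqVneq b.+2 n.
  rewrite -e /= eqxx.
  by rewrite -(sum_ind_nat F b b.+2).
have -> : (b.+1 == n.-1) = false by apply/eqP; lia.
rewrite (eq_bigr (fun k => (k == b.+2)%:R * (pi b.+2 * F k) + (k == b)%:R * ((1 - pi b.+2) * F k))); last first.
  move=> k _ /=; have [->|k2] := eqVneq k b.+2.
    have -> : (b.+2 == b) = false by apply/eqP; lia.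
    by rewrite eqxx /= mul1r mul0r addr0.
  have -> : (k.+1 == b.+3) = false by apply/eqP; lia.
  rewrite /= mul0r add0r; have [->|kb] := eqVneq k b.
    by rewrite eqxx /= mul1r.
  have -> : (k.+2 == b.+2) = false by apply/eqP; lia.
  by rewrite /= !mul0r.
rewrite big_split /= !sum_ind_nat //; lia.
Qed.

Lemma kern_ge0 (x y : 'I_n) : 0 <= bd_kernel pi x y.
Proof.
case: x y => a ha [k hk]; rewrite /bd_kernel /=.
case: ifP => [_|/negbT h1]; first exact: ler0n.
case: ifP => [_|/negbT h2]; first exact: ler0n.
have := hpi a.+1; have -> : (1 < a.+1 <= n.-1)%N by lia.
move=> /(_ isT) /andP[p0 p1].
case: ifP => _; first by [].
by case: ifP => _; lra.
Qed.

Lemma kern_sum (x : 'I_n) : \sum_y bd_kernel pi x y = 1.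
Proof.
have H := row (fun _ => 1) x; simpl in H.
rewrite (eq_bigr (fun y => bd_kernel pi x y * 1)); last by move=> y _; rewrite mulr1.
rewrite H; case: ifP => // _; case: ifP => // _; lra.
Qed.

Definition fn (d : nat -> R) a := \sum_(0 <= k < a) d k.
Definition gn (e : nat -> R) a := \sum_(a <= k < n.-1) e k.

Lemma drift_f d : d 0%N <= 1 ->
  (forall a, (1 <= a)%N -> (a.+1 < n)%N -> pi a.+1 * d a - (1 - pi a.+1) * d a.-1 <= 1) ->
  forall x : 'I_n, val x != n.-1 ->
  \sum_y bd_kernel pi x y * fn d (val y) <= fn d (val x) + 1.
Proof.
move=> d0 hd x hx; rewrite row; move: hx; case: x => a ha /= hx.
case: eqP => [->|a0].
  by rewrite /fn big_nat1 big_geq //; lra.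
rewrite (negbTE hx); case: a ha hx a0 => [|b] ha hx a0 //=.
have := hd b.+1 isT; rewrite /=; have -> : (b.+2 < n)%N by lia.
move=> /(_ isT) h.
rewrite /fn !big_nat_recr //=.
move: h; move: (pi b.+2) (d b) (d b.+1) (\sum_(0 <= i < b) d i) => p x y z /=.
move=> h; lra.
Qed.

Lemma drift_g e : e n.-2 <= 1 ->
  (forall a, (1 <= a)%N -> (a.+1 < n)%N -> (1 - pi a.+1) * e a.-1 - pi a.+1 * e a <= 1) ->
  forall x : 'I_n, val x != 0%N ->
  \sum_y bd_kernel pi x y * gn e (val y) <= gn e (val x) + 1.
Proof.
move=> e0 he x hx; rewrite row; move: hx; case: x => a ha /= hx.
rewrite (negbTE hx); case: eqP => [->|an].
  rewrite /gn (big_ltn (m := n.-2)); last by lia.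
  have -> : n.-2.+1 = n.-1 by lia.
  by rewrite big_geq //; lra.
case: a ha hx an => [|b] ha hx an //=.
have := he b.+1 isT; rewrite /=; have -> : (b.+2 < n)%N by lia.
move=> /(_ isT) h.
rewrite /gn (big_ltn (m := b)); last by lia.
rewrite (big_ltn (m := b.+1)); last by lia.
move: h; move: (pi b.+2) (e b) (e b.+1) (\sum_(b.+2 <= i < n.-1) e i) => p x y z /=.
move=> h; lra.
Qed.

End Chain.



Lemma amhm (R : realType) (c : nat -> R) m : (forall k, (k < m)%N -> 0 < c k) ->
  m%:R ^+ 2 <= (\sum_(0 <= k < m) c k) * (\sum_(0 <= k < m) (c k)^-1).
Proof.
elim: m => [|m IH] hc; first by rewrite !big_geq // mulr0 expr0n.
rewrite !big_nat_recr //=.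
have := IH (fun k hk => hc k (ltnW hk)).
have cm := hc m (ltnSn m).
have A0 : 0 <= \sum_(0 <= k < m) c k.
  rewrite big_nat_cond; apply: sumr_ge0 => k /andP[/andP[_ km] _].
  exact/ltW/hc/ltnW.
have B0 : 0 <= \sum_(0 <= k < m) (c k)^-1.
  rewrite big_nat_cond; apply: sumr_ge0 => k /andP[/andP[_ km] _].
  by rewrite invr_ge0; exact/ltW/hc/ltnW.
move: A0 B0; move: (\sum_(0 <= k < m) c k) (\sum_(0 <= k < m) (c k)^-1) => A B A0 B0 hAB.
have cn0 : c m != 0 by rewrite gt_eqF.
have E : (A + c m) * (B + (c m)^-1) = A * B + A / c m + c m * B + 1 by field.
have uv : (A / c m) * (c m * B) = A * B by field.
have u0 : 0 <= A / c m by rewrite divr_ge0 // ltW.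
have v0 : 0 <= c m * B by rewrite mulr_ge0 // ltW.
rewrite E -natr1.
have x0 := ler0n R m.
move: uv u0 v0 hAB x0; move: (A / c m) (c m * B) (A * B) (m%:R) => u v w x.
move=> uv u0 v0 hw x0.
have s2 : (2 * x) ^+ 2 <= (u + v) ^+ 2 by have := sqr_ge0 (u - v); nra.
have h2 : 2 * x <= u + v.
  by rewrite -(ler_pXn2r (n := 2)) // ?nnegrE; [nra | nra].
nra.
Qed.

Section Exist.
Variables (R : realType) (n : nat) (hn : (1 < n)%N) (pi : nat -> R).
Hypothesis hpi : forall k : nat, (2 <= k <= n.-1)%N -> 0 <= pi k <= 1.

Lemma pi01 a : (1 <= a)%N -> (a.+1 < n)%N -> 0 <= pi a.+1 <= 1.
Proof. by move=> ? ?; apply: hpi; lia. Qed.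

Fixpoint cc (k : nat) : R :=
  if k is k'.+1 then cc k' * pi k.+1 / (1 - pi k.+1) else 1.
Definition Sc k := \sum_(0 <= j < k) cc j.

Lemma exists_de : exists d e : nat -> R,
  [/\ forall k, (k < n.-1)%N -> 0 <= d k /\ 0 <= e k,
      d 0%N <= 1 & e n.-2 <= 1] /\
  [/\ forall a, (1 <= a)%N -> (a.+1 < n)%N -> pi a.+1 * d a - (1 - pi a.+1) * d a.-1 <= 1,
      forall a, (1 <= a)%N -> (a.+1 < n)%N -> (1 - pi a.+1) * e a.-1 - pi a.+1 * e a <= 1 &
      2 * (n.-1)%:R ^+ 2 <= \sum_(0 <= k < n.-1) (d k + e k)].
Proof.
set M := 2 * (n.-1)%:R ^+ 2.
have M0 : 0 <= M by rewrite mulr_ge0 // exprn_ge0.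
case: (pselect (exists a, [/\ (1 <= a)%N, (a.+1 < n)%N & pi a.+1 = 0])).
  move=> [a [a1 an pa]].
  exists (fun k => (k == a)%:R * M), (fun _ => 0); split; split.
  - by move=> k _; rewrite mulr_ge0 ?ler0n.
  - have -> : (0 == a)%N = false by apply/eqP; lia.
    by rewrite mul0r.
  - by [].
  - move=> b b1 bn /=; have /andP[p0 p1] := pi01 b b1 bn.
    have hdb : pi b.+1 * ((b == a)%:R * M) = 0.
      by case: eqVneq => [->|ba]; rewrite ?pa ?mul0r ?mulr0.
    have : 0 <= (1 - pi b.+1) * ((b.-1 == a)%:R * M).
      by rewrite mulr_ge0 ?subr_ge0 // mulr_ge0 ?ler0n.
    lra.
  - by move=> *; rewrite !mulr0 subr0.
  - rewrite big_split /= sum_ind_nat; last by lia.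
    by rewrite big1 ?addr0.
case: (pselect (exists a, [/\ (1 <= a)%N, (a.+1 < n)%N & pi a.+1 = 1])).
  move=> [a [a1 an pa]] _.
  exists (fun _ => 0), (fun k => (k == a.-1)%:R * M); split; split.
  - by move=> k _; rewrite mulr_ge0 ?ler0n.
  - by [].
  - have -> : (n.-2 == a.-1)%N = false by apply/eqP; lia.
    by rewrite mul0r.
  - by move=> *; rewrite !mulr0 subr0.
  - move=> b b1 bn /=; have /andP[p0 p1] := pi01 b b1 bn.
    have hdb : (1 - pi b.+1) * ((b.-1 == a.-1)%:R * M) = 0.
      case: (eqVneq b a) => [->|ba]; first by rewrite pa subrr mul0r.
      have -> : (b.-1 == a.-1) = false by apply/eqP; lia.
      by rewrite mul0r mulr0.
    have : 0 <= pi b.+1 * ((b == a.-1)%:R * M).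
      by rewrite mulr_ge0 // mulr_ge0 ?ler0n.
    lra.
  - rewrite big_split /= sum_ind_nat; last by lia.
    by rewrite big1 ?add0r.
move=> h1 h0.
have pos a : (1 <= a)%N -> (a.+1 < n)%N -> 0 < pi a.+1 < 1.
  move=> a1 an; have /andP[p0 p1] := pi01 a a1 an.
  rewrite !lt_neqAle p0 p1 !andbT; apply/andP; split; apply/negP => /eqP e.
    by apply: h0; exists a; split.
  by apply: h1; exists a; split.
have cc_gt0 : forall k, (k < n.-1)%N -> 0 < cc k.
  elim => [|k IH] hk /=; first exact: ltr01.
  have /andP[p0 p1] := pos k.+1 isT (ltac:(lia)).
  by rewrite divr_gt0 ?mulr_gt0 ?subr_gt0 // IH //; lia.
have Sge0 : forall lo hi, (hi <= n.-1)%N -> 0 <= \sum_(lo <= j < hi) cc j.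
  move=> lo hi hh; rewrite big_nat_cond; apply: sumr_ge0 => j /andP[/andP[_ jh] _].
  by apply/ltW/cc_gt0; lia.
set C := Sc n.-1.
have Csplit : forall k, (k <= n.-1)%N -> C = Sc k + \sum_(k <= j < n.-1) cc j.
  by move=> k hk; rewrite /C /Sc (big_cat_nat (n := k)).
have ScS : forall k, Sc k.+1 = Sc k + cc k by move=> k; rewrite /Sc big_nat_recr.
exists (fun k => (2 * Sc k + cc k) / cc k), (fun k => (cc k + 2 * (C - Sc k.+1)) / cc k).
split; split.
- move=> k hk; have c0 := cc_gt0 k hk; split; apply: divr_ge0 (ltW c0).
    by have := Sge0 0%N k (ltnW hk); rewrite -/(Sc k); lra.
  have := Csplit k.+1 hk; have := Sge0 k.+1 n.-1 (leqnn _); lra.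
- by rewrite /Sc big_geq //= mulr0 add0r divr1.
- have -> : n.-2.+1 = n.-1 by lia.
  rewrite -/C subrr mulr0 addr0 divff // gt_eqF // cc_gt0 //; lia.
- move=> a; case: a => [|b] // _ hb /=.
  have /andP[p0 p1] := pos b.+1 isT hb.
  have cb := cc_gt0 b (ltac:(lia)).
  rewrite ScS.
  move: p0 p1 cb; move: (pi b.+2) (cc b) (Sc b) => p c S p0 p1 cb.
  have pn : p != 0 by rewrite gt_eqF.
  have qn : 1 - p != 0 by rewrite gt_eqF // subr_gt0.
  have cn : c != 0 by rewrite gt_eqF.
  by rewrite le_eqVlt; apply/orP; left; apply/eqP; field; rewrite cn qn pn.
- move=> a; case: a => [|b] // _ hb /=.
  have /andP[p0 p1] := pos b.+1 isT hb.
  have cb := cc_gt0 b (ltac:(lia)).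
  rewrite (ScS b.+1) /=; clear Csplit.
  move: p0 p1 cb; move: (pi b.+2) (cc b) (Sc b.+1) C => p c S C' p0 p1 cb.
  have pn : p != 0 by rewrite gt_eqF.
  have qn : 1 - p != 0 by rewrite gt_eqF // subr_gt0.
  have cn : c != 0 by rewrite gt_eqF.
  by rewrite le_eqVlt; apply/orP; left; apply/eqP; field; rewrite cn qn pn.
- rewrite (eq_big_nat _ _ (F2 := fun k => 2 * C * (cc k)^-1)); last first.
    move=> k /andP[_ hk]; have cn : cc k != 0 by rewrite gt_eqF // cc_gt0.
    by rewrite ScS; field.
  rewrite -mulr_sumr -mulrA /M ler_pM2l //.
  exact: amhm.
Qed.
End Exist.



Theorem lemma1 (R : realType) (n : nat) (hn : (1 < n)%N) (pi : nat -> R)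
    (hpi : forall k : nat, (2 <= k <= n.-1)%N -> 0 <= pi k <= 1)
    (s1 sn : 'I_n) (h1 : val s1 = 0%N) (hn' : val sn = n.-1) :
  ((2 * (n.-1) ^ 2)%N%:R%:E <=
     expected_hit (bd_kernel pi) s1 sn + expected_hit (bd_kernel pi) sn s1)%E.
Proof.
have [d [e [[hde hd0 he0] [hdf hef hsum]]]] := exists_de R n hn pi hpi.
have s1sn : s1 != sn by apply/eqP => /(congr1 val); rewrite h1 hn'; lia.
have sns1 : sn != s1 by rewrite eq_sym.
have hf := @hit_ge R _ _ (@kern_ge0 R n hn pi hpi) (@kern_sum R n hn pi) _ _ s1sn
  (fun y => @fn R d (val y)).
have hg := @hit_ge R _ _ (@kern_ge0 R n hn pi hpi) (@kern_sum R n hn pi) _ _ sns1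
  (fun y => @gn R n e (val y)).
have E1 := hf (ltac:(by rewrite /= h1 /fn big_geq)) (ltac:(
  move=> y /=; rewrite /fn big_nat_cond; apply: sumr_ge0 => k /andP[/andP[_ hk] _];
  have hy := ltn_ord y; case: (hde k (ltac:(lia))) => //)) (ltac:(
  move=> x hx; apply: (@drift_f R n hn) => //; apply: contra hx => /eqP hx;
  apply/eqP/val_inj; rewrite hx hn')).
have E2 := hg (ltac:(by rewrite /= hn' /gn big_geq)) (ltac:(
  move=> y /=; rewrite /gn big_nat_cond; apply: sumr_ge0 => k /andP[/andP[_ hk] _];
  case: (hde k (ltac:(lia))) => //)) (ltac:(
  move=> x hx; apply: (@drift_g R n hn) => //; apply: contra hx => /eqP hx;
  apply/eqP/val_inj; rewrite hx h1)).
rewrite /= h1 hn' in E1 E2.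
move: (E1 erefl) (E2 erefl) => {}E1 {}E2.
apply: (le_trans _ (leeD E1 E2)).
rewrite -EFinD lee_fin /fn /gn -big_split /= natrM natrX.
exact: hsum.
Qed.
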